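(* For $k\ge1$, let $\mathcal B_k$ be the set of $k\times k$ symmetric matrices over $\mathbb F_2$ of rank $k-1$ with every row sum $0$. Then $\#\mathcal B_k=u_k\cdot2^{\binom k2}$, where $u_k=\prod_{i=1}^{\lfloor k/2\rfloor}(1-2^{1-2i})$. *)

(* Defs.v *)
From HB Require Import structures.
From mathcomp Require Import all_boot all_order all_algebra.
Set Implicit Arguments. Unset Strict Implicit. Unset Printing Implicit Defensive.
Import Order.TTheory GRing.Theory Num.Theory.

Definition Bset (k : nat) : {set 'M['F_2]_k} :=
  [set A : 'M['F_2]_k | [&& trmx A == A, (\rank A == k.-1)%N
                         & [forall i, (\sum_j A i j == 0)%R]]].

Definition u_k (k : nat) : rat :=
  \prod_(1 <= i < (k./2).+1) (1 - (2%:R ^- (2 * i - 1)%N : rat))%R.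

(* Main.v *)
Require Import Defs.
From HB Require Import structures.
From mathcomp Require Import all_boot all_order all_algebra.
From mathcomp Require Import zify ring.
Import Order.TTheory GRing.Theory Num.Theory.
Set Implicit Arguments. Unset Strict Implicit. Unset Printing Implicit Defensive.
Local Open Scope ring_scope.

Lemma F2cases (x : 'F_2) : x = 0 \/ x = 1.
Proof.
case: x => [[|[|i]] Hi]; [left|right|by []]; exact/val_inj.
Qed.

Lemma M1cases (a : 'M['F_2]_1) : a = 0 \/ a = 1%:M.
Proof.
rewrite [a]mx11_scalar; case: (F2cases (a 0 0)) => ->; [left|right] => //.
by apply/matrixP => i j; rewrite !mxE mul0rn.
Qed.

Lemma M1neq0 (a : 'M['F_2]_1) : (a != 0) = (a == 1%:M).
Proof.
have h01 : (0 : 'M['F_2]_1) <> 1%:M.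
  by move/matrixP/(_ 0 0)/eqP; rewrite !mxE (eqxx (0 : 'I_1)) /= eq_sym oner_eq0.
apply/idP/idP.
  by case: (M1cases a) => ->; [move/eqP=> /(_ erefl)|move=> _; apply/eqP].
case: (M1cases a) => ->; first by move/eqP/h01.
by move=> _; apply/eqP => /esym/h01.
Qed.

Lemma sumM1 (F : 'M['F_2]_1 -> nat) : (\sum_a F a)%N = (F 0%R + F 1%:M%R)%N.
Proof.
rewrite (bigD1 (0 : 'M_1)) //=; congr (_ + _)%N.
by rewrite (eq_bigl (fun a => a == 1%:M)) ?big_pred1_eq // => a; rewrite M1neq0.
Qed.

Lemma unitM1 (c : 'M['F_2]_1) : c \in unitmx -> c = 1%:M.
Proof.
rewrite unitmxE det_mx11 unitfE; case: (M1cases c) => -> //.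
by rewrite mxE eqxx.
Qed.

Lemma unit_castmx (R : comUnitRingType) m n (e : m = n) (A : 'M[R]_m) :
  (castmx (e, e) A \in unitmx) = (A \in unitmx).
Proof. by case: n / e; rewrite castmx_id. Qed.

Lemma decomp m (g : 'M['F_2]_(1+m) -> nat) :
  (\sum_A g A = \sum_(a : 'M_1) \sum_(u : 'rV_m) \sum_(v : 'cV_m)
     \sum_(B : 'M_m) g (block_mx a u v B))%N.
Proof.
rewrite (reindex (fun p : 'M_1 * ('rV_m * ('cV_m * 'M_m)) =>
            block_mx p.1 p.2.1 p.2.2.1 p.2.2.2)) /=; last first.
  exists (fun A => (ulsubmx A, (ursubmx A, (dlsubmx A, drsubmx A))))
    => [[a [u [v B]]] _ | A _] /=.
    by rewrite block_mxKul block_mxKur block_mxKdl block_mxKdr.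
  by rewrite submxK.
rewrite -(pair_bigA _ (fun a (q : 'rV_m * ('cV_m * 'M_m)) =>
   g (block_mx a q.1 q.2.1 q.2.2))) /=; apply: eq_bigr => a _.
rewrite -(pair_bigA _ (fun u (q : 'cV_m * 'M_m) =>
   g (block_mx a u q.1 q.2))) /=; apply: eq_bigr => u _.
by rewrite -(pair_bigA _ (fun v B => g (block_mx a u v B))).
Qed.

Lemma trM1 (a : 'M['F_2]_1) : a^T = a.
Proof. by rewrite [a]mx11_scalar tr_scalar_mx. Qed.

Lemma symblock m (a : 'M['F_2]_1) (u : 'rV_m) (v : 'cV_m) (B : 'M_m) :
  ((block_mx a u v B)^T == block_mx a u v B) = (u == v^T) && (B^T == B).
Proof.
rewrite tr_block_mx; apply/eqP/andP => [/eq_block_mx [_ h1 h2 h3] | [/eqP-> /eqP->]].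
  by rewrite -h1 eqxx h3.
by rewrite trM1 trmxK.
Qed.

Lemma symdec m (f : 'M['F_2]_(1+m) -> nat) :
  (\sum_(A | A^T == A) f A = \sum_(a : 'M_1) \sum_(v : 'cV_m)
     \sum_(B | B^T == B) f (block_mx a v^T v B))%N.
Proof.
rewrite big_mkcond decomp; apply: eq_bigr => a _.
rewrite exchange_big /=; apply: eq_bigr => v _.
rewrite (bigD1 v^T) //= [X in (_ + X)%N]big1 ?addn0; last first.
  by move=> u /negbTE neq; apply: big1 => B _; rewrite symblock neq.
by rewrite [RHS]big_mkcond; apply: eq_bigr => B _; rewrite symblock eqxx.
Qed.

Definition snum n := (\sum_(B : 'M['F_2]_n | B^T == B) (B \in unitmx : nat))%N.

Definition G0 m (v : 'cV['F_2]_m) :=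
  (\sum_(B : 'M['F_2]_m | B^T == B) (block_mx (0 : 'M_1) v^T v B \in unitmx : nat))%N.

Lemma unit_block1 m (u : 'rV['F_2]_m) (w : 'cV_m) (B : 'M_m) :
  (block_mx (1%:M : 'M_1) u w B \in unitmx) = (B - w *m u \in unitmx).
Proof.
have -> : block_mx (1%:M : 'M_1) u w B =
   block_mx 1%:M 0 w 1%:M *m block_mx 1%:M u 0 (B - w *m u).
  rewrite mulmx_block !mulmx1 !mul1mx !mul0mx !addr0 ?mulmx0 ?add0r.
  by rewrite (addrC (w *m u)) subrK.
by rewrite unitmx_mul !unitmxE det_lblock det_ublock !det1 !mul1r unitr1.
Qed.

Lemma unit_block00 m (B : 'M['F_2]_m) :
  (block_mx (0 : 'M_1) 0 0 B \in unitmx) = false.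
Proof. by rewrite unitmxE det_ublock det0 mul0r unitr0. Qed.

Lemma rec1 m :
  snum (1 + m) = (\sum_(v : 'cV_m | v != 0%R) G0 v + 2 ^ m * snum m)%N.
Proof.
rewrite {1}/snum symdec sumM1; congr (_ + _)%N.
  rewrite (bigD1 (0 : 'cV_m)) //= {1}/G0 big1 ?add0n // => B _.
  by rewrite trmx0 unit_block00.
transitivity (\sum_(v : 'cV['F_2]_m) snum m)%N.
  apply: eq_bigr => v _; rewrite /snum (reindex_inj (addIr (v *m v^T))) /=.
  apply: eq_big => B.
    by rewrite linearD /= trmx_mul trmxK (inj_eq (addIr _)).
  by rewrite unit_block1 addrK.
by rewrite sum_nat_const card_mx card_Fp // muln1.
Qed.

Lemma exP n (v : 'cV['F_2]_(1+n)) : v != 0 ->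
  exists2 P : 'M_(1+n), P \in unitmx & P *m v = col_mx (1%:M : 'M_1) 0.
Proof.
move=> nz.
have rk : \rank v = 1%N.
  by apply/eqP; rewrite eqn_leq rank_leq_col lt0n mxrank_eq0 nz.
have E := mulmx_ebase v.
rewrite rk (unitM1 (row_ebase_unit v)) mulmx1 in E.
exists (invmx (col_ebase v)); first by rewrite unitmx_inv col_ebase_unit.
rewrite -{2}E mulKmx ?col_ebase_unit //.
apply/matrixP => i j; rewrite !mxE (ord1 j); case: splitP => k ->; rewrite !mxE.
  by rewrite (ord1 k).
done.
Qed.

Lemma G0_inv n (v : 'cV['F_2]_n) (P : 'M_n) : P \in unitmx -> G0 (P *m v) = G0 v.
Proof.
move=> uP.
have uPT : P^T \in unitmx by rewrite unitmx_tr.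
have hinj : injective (fun B : 'M['F_2]_n => P *m B *m P^T).
  move=> B1 B2 /(congr1 (mulmx^~ (invmx P^T))) /=; rewrite !mulmxK //.
  by move/(congr1 (mulmx (invmx P))); rewrite !mulKmx.
rewrite /G0 (reindex_inj hinj) /=; apply: eq_big => B.
  by rewrite !trmx_mul trmxK mulmxA (inj_eq hinj).
move=> _.
have -> : block_mx (0 : 'M_1) (P *m v)^T (P *m v) (P *m B *m P^T) =
  block_mx 1%:M 0 0 P *m block_mx (0 : 'M_1) v^T v B *m (block_mx 1%:M 0 0 P)^T.
  rewrite tr_block_mx !trmx0 trmx1 !mulmx_block.
  by rewrite !mul0mx !mulmx0 !mul1mx !mulmx1 !addr0 !add0r trmx_mul.
have uD : block_mx (1%:M : 'M_1) 0 0 P \in unitmx.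
  by rewrite unitmxE det_ublock det1 mul1r -unitmxE.
by rewrite !unitmx_mul unitmx_tr uD andbT.
Qed.

Lemma unitU2 n (d : 'M['F_2]_1) (x : 'cV_n) (C : 'M_n) :
  (block_mx (0 : 'M_1) (col_mx (1%:M : 'M_1) (0 : 'cV_n))^T (col_mx 1%:M 0)
      (block_mx d x^T x C) \in unitmx) = (C \in unitmx).
Proof.
rewrite tr_col_mx trmx1 trmx0 block_mxAx unit_castmx.
set H := block_mx (0 : 'M_1) _ _ d.
have -> : block_mx H (col_mx 0 x^T) (row_mx 0 x) C =
   block_mx 1%:M 0 (row_mx x 0) 1%:M *m block_mx H (col_mx 0 x^T) 0 C.
  rewrite mulmx_block mul_row_block mul_row_col.
  by rewrite !mul0mx !mulmx0 !mul1mx !mulmx1 !addr0 !add0r.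
rewrite unitmx_mul !unitmxE det_lblock det_ublock !det1 mul1r unitr1 /=.
have uH : H \in unitmx.
  have [] := @mulmx1_unit _ _ H (block_mx (- d) 1%:M 1%:M 0).
    rewrite mulmx_block !mul0mx !mul1mx !mulmx1 !mulmx0 !addr0 !add0r addNr.
    by rewrite [RHS](scalar_mx_block 1 1).
  by [].
by rewrite unitrM -unitmxE uH.
Qed.

Lemma G0_e0 n : G0 (col_mx (1%:M : 'M['F_2]_1) (0 : 'cV_n)) = (2 * 2^n * snum n)%N.
Proof.
rewrite /G0 symdec.
transitivity (\sum_(d : 'M['F_2]_1) \sum_(x : 'cV['F_2]_n) snum n)%N.
  apply: eq_bigr => d _; apply: eq_bigr => x _; rewrite /snum.
  by apply: eq_bigr => C _; rewrite unitU2.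
by rewrite !sum_nat_const !card_mx card_Fp // !muln1 mulnA.
Qed.

Lemma rec2 n : snum n.+2 =
  (2 ^ n.+1 * snum n.+1 + (2 ^ n.+1 - 1) * (2 * 2 ^ n * snum n))%N.
Proof.
rewrite [snum n.+2](rec1 (1 + n)) addnC; congr (_ + _)%N.
set c := (2 * 2 ^ n * snum n)%N.
transitivity (\sum_(v : 'cV['F_2]_(1 + n) | v != 0%R) c)%N.
  apply: eq_bigr => v nz; case: (exP nz) => P uP Pv.
  by rewrite -(G0_inv v uP) Pv G0_e0.
rewrite sum_nat_const.
rewrite (@eq_card _ _ (predC1 (0 : 'cV['F_2]_(1 + n)))) // cardC1 card_mx card_Fp //.
by rewrite muln1 subn1.
Qed.

Lemma rowsumE k (A : 'M['F_2]_k) :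
  [forall i, (\sum_j A i j == 0)] = (A *m (const_mx 1 : 'cV_k) == 0).
Proof.
apply/forallP/eqP => [h | h i].
  apply/matrixP => i j; rewrite !mxE (ord1 j).
  rewrite (eq_bigr (fun j => A i j)) => [|l _]; last by rewrite mxE mulr1.
  exact/eqP/h.
have := congr1 (fun M : 'M['F_2]_(k,1) => M i 0) h; rewrite !mxE => H.
by apply/eqP; apply: etrans H; apply: eq_bigr => l _; rewrite mxE mulr1.
Qed.

Lemma rowsum_block n (a : 'M['F_2]_1) (v : 'cV_n) (B : 'M_n) :
  (block_mx a v^T v B *m (const_mx 1 : 'cV_(1 + n)) == 0) =
  (a == - (v^T *m const_mx 1)) && (v == - (B *m (const_mx 1 : 'cV_n))).
Proof.
have e1 : (const_mx 1 : 'M['F_2]_1) = 1%:M.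
  by apply/matrixP => i j; rewrite !mxE (ord1 i) (ord1 j).
by rewrite -(col_mx_const 1 n) mul_block_col col_mx_eq0 e1 !mulmx1 !addr_eq0.
Qed.

Lemma rankblock n (B : 'M['F_2]_n) (o : 'cV_n) : B^T = B ->
  \rank (block_mx (- ((- (B *m o))^T *m o)) (- (B *m o))^T (- (B *m o)) B)
  = \rank B.
Proof.
move=> sB.
set M := row_mx (- o) (1%:M : 'M_n).
have E : block_mx (- ((- (B *m o))^T *m o)) (- (B *m o))^T (- (B *m o)) B
         = M^T *m B *m M.
  rewrite /M tr_row_mx trmx1 mul_col_mx mul_col_row mul1mx mulmx1.
  by rewrite !linearN /= trmx_mul sB !mulNmx mulmx1.
rewrite E; apply/eqP; rewrite eqn_leq; apply/andP; split.
  by rewrite (leq_trans (mxrankM_maxl _ _)) // mxrankM_maxr.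
pose N := row_mx (0 : 'cV['F_2]_n) (1%:M : 'M['F_2]_n).
have NM : N *m M^T = 1%:M by rewrite /M tr_row_mx trmx1 mul_row_col mul0mx add0r mulmx1.
have MN : M *m N^T = 1%:M by rewrite -[M](trmxK) -trmx_mul NM trmx1.
have HB : B = N *m (M^T *m B *m M) *m N^T.
  by rewrite !mulmxA NM mul1mx -mulmxA MN mulmx1.
rewrite {1}HB.
by rewrite (leq_trans (mxrankM_maxl _ _)) // mxrankM_maxr.
Qed.

Lemma cardB n : #|Bset (1 + n)| = snum n.
Proof.
rewrite -sum1_card.
rewrite (eq_bigl (fun A : 'M['F_2]_(1 + n) => (A^T == A) &&
   ((\rank A == n) && (A *m (const_mx 1 : 'cV_(1 + n)) == 0)))); last first.
  by move=> A; rewrite inE rowsumE.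
rewrite big_mkcondr symdec exchange_big /=.
under eq_bigr => v _ do rewrite exchange_big /=.
rewrite exchange_big /= /snum; apply: eq_bigr => B sB.
under eq_bigr => v _ do under eq_bigr => a _ do rewrite rowsum_block.
rewrite (bigD1 (- (B *m const_mx 1))) //= [X in (_ + X)%N]big1 ?addn0; last first.
  by move=> v /negbTE nv; apply: big1 => a _; rewrite nv !andbF.
rewrite (bigD1 (- ((- (B *m const_mx 1))^T *m const_mx 1))) //=.
rewrite [X in (_ + X)%N]big1 ?addn0; last first.
  by move=> a /negbTE na; rewrite na /= !andbF.
rewrite !eqxx andbT rankblock; last exact/eqP.
by rewrite -row_free_unit /row_free; case: (_ == _).
Qed.

Lemma snum0 : snum 0 = 1%N.
Proof.
rewrite /snum (bigD1 0) //= ?trmx0 ?eqxx // big1 ?addn0.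
  by rewrite unitmxE det_mx00 unitr1.
by move=> B /andP[_]; rewrite [B]flatmx0 eqxx.
Qed.

Lemma snum1 : snum 1 = 1%N.
Proof.
rewrite [snum 1](rec1 0) snum0 big1 // => v.
by rewrite [v]flatmx0 eqxx.
Qed.

Definition fj j := if odd j then (2 ^ j - 1)%N else (2 ^ j)%N.

Lemma step n : snum n.+1 = (fj n.+1 * snum n)%N.
Proof.
elim: n => [|n IH]; first by rewrite snum1 snum0.
rewrite rec2 IH /fj /= !expnS.
have x0 : (0 < 2 ^ n)%N by rewrite expn_gt0.
case: (odd n) => /=; nia.
Qed.

Lemma closed n : ((snum n)%:R : rat) = u_k n.+1 * 2%:R ^+ 'C(n.+1, 2).
Proof.
elim: n => [|n IH].
  by rewrite snum0 /u_k /= big_geq // mul1r bin_small.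
have eC : 'C(n.+2, 2) = ('C(n.+1, 2) + n.+1)%N by rewrite binS bin1.
rewrite step natrM IH /u_k eC exprD.
have e2 : (n.+2)./2 = (n./2).+1 by [].
rewrite e2 /fj /=.
have Hn := odd_double_half n.
case Ho : (odd n) => /=.
  have -> : uphalf n = (n./2).+1 by rewrite uphalf_half Ho.
  rewrite natrX; ring.
have -> : uphalf n = n./2 by rewrite uphalf_half Ho.
rewrite [in RHS]big_nat_recr //= natrB; last by rewrite expn_gt0.
have -> : (2 * (n./2).+1 - 1)%N = n.+1.
  move: Hn; rewrite Ho add0n -muln2; lia.
rewrite natrX.
have y0 : (2%:R ^+ n.+1 : rat) != 0 by rewrite expf_neq0.
field.
exact: y0.
Qed.

Theorem mainTheorem7 (k : nat) (hk : (1 <= k)%N) :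
  (#|Bset k|%:R : rat) = (u_k k * 2%:R ^+ 'C(k, 2))%R.
Proof.
case: k hk => [//|n] _.
have := cardB n; rewrite /= => ->.
exact: closed.
Qed.
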